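(* Let $R$ be a binary relation on the nodes of a $\lambda$-graph. If $R^{\Downarrow}$ is homogeneous, then $R^{\#}=(R^{\Downarrow})^*$.
   Context: A $\lambda$-graph is a finite directed graph whose nodes are of four kinds: an application node $@(n_1,n_2)$ has exactly two children, its left child $n_1$ and its right child $n_2$; an abstraction node $\lambda(n)$ has exactly one child, its body $n$; a free variable node has no children; a bound variable node $\mathrm{var}(l)$ has exactly one outgoing binding edge, to an abstraction node $l$ (its binder). (It is moreover required to be acyclic when binding edges are ignored, and dominated.) Two nodes are homogeneous if both are application nodes, or both abstraction nodes, or both free variable nodes, or both bound variable nodes; a binary relation $R$ on nodes is homogeneous if it only relates homogeneous nodes. Rules: $(\swarrow)$: $@(n_1,n_2)\,R\,@(m_1,m_2)$ implies $n_1\,R\,m_1$; $(\searrow)$: $@(n_1,n_2)\,R\,@(m_1,m_2)$ implies $n_2\,R\,m_2$; $(\downarrow)$: $\lambda(n)\,R\,\lambda(m)$ implies $n\,R\,m$. $R$ is propagated if closed under $(\swarrow),(\downarrow),(\searrow)$. $R^*$ denotes the reflexive–symmetric–transitive closure of $R$; $R^{\Downarrow}$ (propagation) is the smallest propagated relation containing $R$; $R^{\#}$ (spreading) is the smallest propagated equivalence relation containing $R$. *)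

(* Defs.v *)
From mathcomp Require Import all_boot.
From Stdlib Require Import Relations.
Set Implicit Arguments. Unset Strict Implicit. Unset Printing Implicit Defensive.

(** Kinds of nodes of a lambda-graph, with their outgoing edges. *)
Inductive lnode (V : Type) :=
  | NApp of V & V   (* application @(n1,n2): left child, right child *)
  | NAbs of V
  | NFree
  | NBVar of V.     (* bound variable var(l): binding edge to l *)

Section LambdaGraph.
Variables (V : finType) (lab : V -> lnode V).

(** child edges (binding edges excluded) *)
Definition child : rel V := fun x y =>
  match lab x with
  | NApp a b => (y == a) || (y == b)
  | NAbs a => y == a
  | _ => false
  end.

Definition is_abs (x : V) : bool := if lab x is NAbs _ then true else false.

Definition is_root (r : V) : bool := [forall x, ~~ child x r].

Definition acyclic_children : Prop :=
  forall x y, child x y -> ~~ connect child y x.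

Definition binders_abs : Prop :=
  forall v l, lab v = NBVar l -> is_abs l.

Definition dominated : Prop :=
  forall v l, lab v = NBVar l ->
  forall r s, is_root r -> path child r s -> last r s = v -> l \in r :: s.

Definition lambda_graph : Prop :=
  [/\ binders_abs, acyclic_children & dominated].

Definition homogeneous_nodes (x y : V) : Prop :=
  match lab x, lab y with
  | NApp _ _, NApp _ _ | NAbs _, NAbs _ | NFree, NFree | NBVar _, NBVar _ => True
  | _, _ => False
  end.

Definition homogeneous (R : relation V) : Prop :=
  forall x y, R x y -> homogeneous_nodes x y.

(** closure under the rules (swarrow), (searrow), (downarrow) *)
Definition propagated (R : relation V) : Prop :=
  (forall x y a1 a2 b1 b2, R x y -> lab x = NApp a1 a2 -> lab y = NApp b1 b2 ->
     R a1 b1 /\ R a2 b2) /\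
  (forall x y a b, R x y -> lab x = NAbs a -> lab y = NAbs b -> R a b).

(** R^{Downarrow}: smallest propagated relation containing R *)
Inductive propagation (R : relation V) : relation V :=
  | prop_base x y : R x y -> propagation R x y
  | prop_left x y a1 a2 b1 b2 : propagation R x y ->
      lab x = NApp a1 a2 -> lab y = NApp b1 b2 -> propagation R a1 b1
  | prop_right x y a1 a2 b1 b2 : propagation R x y ->
      lab x = NApp a1 a2 -> lab y = NApp b1 b2 -> propagation R a2 b2
  | prop_down x y a b : propagation R x y ->
      lab x = NAbs a -> lab y = NAbs b -> propagation R a b.

(** R^#: smallest propagated equivalence relation containing R *)
Inductive spreading (R : relation V) : relation V :=
  | spr_base x y : R x y -> spreading R x y
  | spr_refl x : spreading R x x
  | spr_sym x y : spreading R x y -> spreading R y x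
  | spr_trans x y z : spreading R x y -> spreading R y z -> spreading R x z
  | spr_left x y a1 a2 b1 b2 : spreading R x y ->
      lab x = NApp a1 a2 -> lab y = NApp b1 b2 -> spreading R a1 b1
  | spr_right x y a1 a2 b1 b2 : spreading R x y ->
      lab x = NApp a1 a2 -> lab y = NApp b1 b2 -> spreading R a2 b2
  | spr_down x y a b : spreading R x y ->
      lab x = NAbs a -> lab y = NAbs b -> spreading R a b.

End LambdaGraph.

(** R^*: reflexive-symmetric-transitive closure *)
Definition rst_closure (V : Type) (R : relation V) : relation V :=
  clos_refl_sym_trans V R.

(* Main.v *)
Require Import Defs.
From mathcomp Require Import all_boot.
From Stdlib Require Import Relations.

Lemma rst_app (V : finType) (lab : V -> lnode V) (R : relation V) :
  homogeneous lab (propagation lab R) ->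
  forall x y, clos_refl_sym_trans_1n V (propagation lab R) x y ->
  forall a1 a2 b1 b2, lab x = NApp a1 a2 -> lab y = NApp b1 b2 ->
  rst_closure (propagation lab R) a1 b1 /\ rst_closure (propagation lab R) a2 b2.
Proof.
  move=> Hh x y; elim => [z|u z w Hs Hr IH] a1 a2 b1 b2 Hx Hy.
  - rewrite Hx in Hy; case: Hy => <- <-; split; apply: rst_refl.
  - have Hz : exists c1 c2, lab z = NApp c1 c2.
      case: Hs => H; have := Hh _ _ H; rewrite /homogeneous_nodes Hx;
      case: (lab z) => //; eauto.
    case: Hz => c1 [c2 Hz].
    case: (IH _ _ _ _ Hz Hy) => H1 H2.
    case: Hs => H; split; (eapply rst_trans; [|eassumption]).
    + apply: rst_step; exact: (prop_left H Hx Hz).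
    + apply: rst_step; exact: (prop_right H Hx Hz).
    + apply: rst_sym; apply: rst_step; exact: (prop_left H Hz Hx).
    + apply: rst_sym; apply: rst_step; exact: (prop_right H Hz Hx).
Qed.

Lemma rst_abs (V : finType) (lab : V -> lnode V) (R : relation V) :
  homogeneous lab (propagation lab R) ->
  forall x y, clos_refl_sym_trans_1n V (propagation lab R) x y ->
  forall a b, lab x = NAbs a -> lab y = NAbs b ->
  rst_closure (propagation lab R) a b.
Proof.
  move=> Hh x y; elim => [z|u z w Hs Hr IH] a b Hx Hy.
  - rewrite Hx in Hy; case: Hy => <-; apply: rst_refl.
  - have Hz : exists c, lab z = NAbs c.
      case: Hs => H; have := Hh _ _ H; rewrite /homogeneous_nodes Hx;
      case: (lab z) => //; eauto.
    case: Hz => c Hz.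
    have H1 := IH _ _ Hz Hy.
    case: Hs => H; (eapply rst_trans; [|eassumption]).
    + apply: rst_step; exact: (prop_down H Hx Hz).
    + apply: rst_sym; apply: rst_step; exact: (prop_down H Hz Hx).
Qed.

Theorem mainTheorem11 (V : finType) (lab : V -> lnode V) (R : relation V) :
  lambda_graph lab ->
  homogeneous lab (propagation lab R) ->
  forall x y, spreading lab R x y <-> rst_closure (propagation lab R) x y.
Proof.
  move=> _ Hh x y; split.
  - elim.
    + move=> u v H; apply: rst_step; exact: prop_base.
    + move=> u; apply: rst_refl.
    + move=> u v _ H; exact: rst_sym.
    + move=> u v w _ H1 _ H2; exact: rst_trans H1 H2.
    + move=> u v a1 a2 b1 b2 _ H Hu Hv.
      move/clos_rst_rst1n_iff: H => H; by case: (@rst_app _ _ _ Hh _ _ H _ _ _ _ Hu Hv).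
    + move=> u v a1 a2 b1 b2 _ H Hu Hv.
      move/clos_rst_rst1n_iff: H => H; by case: (@rst_app _ _ _ Hh _ _ H _ _ _ _ Hu Hv).
    + move=> u v a b _ H Hu Hv.
      move/clos_rst_rst1n_iff: H => H; exact: (@rst_abs _ _ _ Hh _ _ H _ _ Hu Hv).
  - elim.
    + move=> u v; elim.
      * move=> ? ? H; exact: spr_base.
      * move=> ? ? ? ? ? ? _ H H1 H2; exact: (spr_left H H1 H2).
      * move=> ? ? ? ? ? ? _ H H1 H2; exact: (spr_right H H1 H2).
      * move=> ? ? ? ? _ H H1 H2; exact: (spr_down H H1 H2).
    + move=> u; exact: spr_refl.
    + move=> u v _ H; exact: spr_sym.
    + move=> u v w _ H1 _ H2; exact: spr_trans H1 H2.
Qed.
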